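(* Let $t,\ell,s\geq 1$ be integers and $\varepsilon,\delta\in(0,1)$. Let $\mathcal{H}$ be a $t$-uniform $(\varepsilon,\delta)$-superspread hypergraph and let $\mathfrak{B}$ be a collection of ordered $\ell$-tuples of distinct vertices of $\mathcal{H}$ such that for any $v_1,\dots,v_{\ell-1}\in V(\mathcal{H})$ there are at most $s$ vertices $v_\ell$ with $(v_1,\dots,v_\ell)\in\mathfrak{B}$. Then at most $(\varepsilon+t!\,s\,\delta)\,e(\mathcal{H})$ edges of $\mathcal{H}$ contain (all the vertices of) some tuple of $\mathfrak{B}$.
   Context: For $S\subseteq V(\mathcal{H})$, $\deg_{\mathcal{H}}(S)=|\{e\in E(\mathcal{H}): S\subseteq e\}|$. An edge $e$ is $\delta$-heavy if there exist $S\subseteq e$ and $v\in e\setminus S$ with $\deg_{\mathcal{H}}(S\cup\{v\})\geq\delta\deg_{\mathcal{H}}(S)$; otherwise it is $\delta$-light. $\mathcal{H}$ is $(\varepsilon,\delta)$-superspread if at most $\varepsilon\,e(\mathcal{H})$ of its edges are $\delta$-heavy. *)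

(* Defs.v *)
From mathcomp Require Import all_boot all_order all_algebra.
Set Implicit Arguments. Unset Strict Implicit. Unset Printing Implicit Defensive.
Import Order.TTheory GRing.Theory Num.Theory.
Local Open Scope ring_scope.

(* A hypergraph on a finite vertex type V is its edge set H : {set {set V}}. *)

Definition hdeg (V : finType) (H : {set {set V}}) (S : {set V}) : nat :=
  #|[set e in H | S \subset e]|.

Definition uniform (V : finType) (t : nat) (H : {set {set V}}) : Prop :=
  forall e, e \in H -> #|e| = t.

Definition heavy (R : realFieldType) (V : finType) (H : {set {set V}})
  (delta : R) (e : {set V}) : bool :=
  [exists S : {set V}, (S \subset e) &&
    [exists v in e :\: S, delta * (hdeg H S)%:R <= (hdeg H (v |: S))%:R]].

Definition superspread (R : realFieldType) (V : finType) (H : {set {set V}})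
  (eps delta : R) : Prop :=
  (#|[set e in H | heavy H delta e ]|)%:R <= eps * (#|H|)%:R.

Definition contains_tuple (V : finType) (l : nat) (B : {set l.-tuple V})
  (e : {set V}) : bool :=
  [exists b in B, all (fun x => x \in e) b].

(* Main.v *)
Require Import Defs.
From mathcomp Require Import all_boot all_order all_algebra.
Import Order.TTheory GRing.Theory Num.Theory.
Set Implicit Arguments. Unset Strict Implicit.

Definition tset (V : finType) (s : seq V) : {set V} := [set x in s].
Arguments tset {V} s.

Lemma hdegE (V : finType) (H : {set {set V}}) S :
  hdeg H S = \sum_(e in H) (S \subset e : nat).
Proof.
rewrite /hdeg -sum1_card big_mkcond [RHS]big_mkcond /=.
by apply: eq_bigr => e _; rewrite !inE; case: (e \in H); case: (S \subset e).
Qed.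

Lemma count_uniq_sub (V : finType) k (e : {set V}) :
  #|[set p : k.-tuple V | uniq p & tset p \subset e]| <= #|e|`!.
Proof.
have -> : [set p : k.-tuple V | uniq p & tset p \subset e]
        = [set p : k.-tuple V | all [in e] p & uniq p].
  apply/setP => p; rewrite !inE andbC; congr (_ && _).
  apply/subsetP/allP => h x xp; first by apply: h; rewrite inE.
  by apply: h; move: xp; rewrite inE.
rewrite card_uniq_tuples.
have -> : #|[in e]| = #|e| by apply: eq_card.
case: (leqP k #|e|) => hk.
  rewrite -(ffact_fact hk); apply: leq_pmulr; exact: fact_gt0.
by rewrite ffact_small.
Qed.

Lemma sum_uniq_deg (V : finType) t k (H : {set {set V}}) :
  uniform t H ->
  \sum_(p : k.-tuple V | uniq p) hdeg H (tset p) <= t`! * #|H|.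
Proof.
move=> hu.
under eq_bigr => p _ do rewrite hdegE.
rewrite exchange_big /= mulnC -sum1_card big_distrl /=.
apply: leq_sum => e eH; rewrite mul1n -(hu e eH).
have := count_uniq_sub k e.
apply: leq_trans.
rewrite -sum1_card big_mkcond [X in _ <= X]big_mkcond /=.
apply: leq_sum => p _; rewrite inE.
by case: (uniq p); case: (tset p \subset e).
Qed.

Local Open Scope ring_scope.

Theorem proposition2p7 (R : realFieldType) (V : finType) (t l s : nat)
  (eps delta : R) (H : {set {set V}}) (B : {set l.-tuple V}) :
  (1 <= t)%N -> (1 <= l)%N -> (1 <= s)%N ->
  0 < eps < 1 -> 0 < delta < 1 ->
  uniform t H ->
  superspread H eps delta ->
  (forall b, b \in B -> uniq b) ->
  (forall p : (l.-1).-tuple V,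
      (#|[set v : V | [exists b in B, val b == rcons p v]]| <= s)%N) ->
  (#|[set e in H | contains_tuple B e]|)%:R
    <= (eps + (t`!)%:R * s%:R * delta) * (#|H|)%:R.
Proof.
move=> t1 l1 s1 /andP[e0 e1] /andP[d0 d1] hu hss hB hs.
set L := [set e in H | ~~ heavy H delta e].
set CL := [set e in H | contains_tuple B e & ~~ heavy H delta e].
pose P (pv : ((l.-1).-tuple V * V)) :=
  [exists b in B, val b == rcons pv.1 pv.2] &&
  [exists e in L, pv.2 |: tset pv.1 \subset e].
have decomp : forall b : l.-tuple V, exists pv : (l.-1).-tuple V * V,
    val b = rcons pv.1 pv.2.
  move=> b; case/lastP E: (val b) => [|q x].
    by have := size_tuple b; rewrite E /=; move=> l0; rewrite -l0 in l1.
  have hq : size q == l.-1 by rewrite -(size_tuple b) E size_rcons.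
  by exists (Tuple hq, x).
have tsetR : forall (p : seq V) v, tset (rcons p v) = v |: tset p.
  by move=> p v; apply/setP => x; rewrite !inE mem_rcons inE.
have step1 : (#|CL| <= \sum_(pv | P pv) hdeg H (pv.2 |: tset pv.1))%N.
  under eq_bigr => pv _ do rewrite hdegE.
  rewrite exchange_big /= -sum1_card.
  rewrite [X in (_ <= X)%N](bigID (fun e => e \in CL)) /=.
  apply: leq_trans (leq_addr _ _).
  rewrite [X in (_ <= X)%N]big_mkcond /= [X in (X <= _)%N]big_mkcond /=.
  apply: leq_sum => e _.
  case eCL: (e \in CL); last by rewrite andbF.
  have eH : e \in H by move: eCL; rewrite inE => /andP[].
  rewrite eH /=.
  move: eCL; rewrite inE => /andP[_ /andP[/existsP[b /andP[bB ball]] nh]].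
  have [[p v] E] := decomp b.
  have sub : v |: tset p \subset e.
    apply/subsetP => x; rewrite -tsetR -E inE => xb.
    exact: (allP ball).
  have Ppv : P (p, v).
    apply/andP; split; first by apply/existsP; exists b; rewrite bB E eqxx.
    by apply/existsP; exists e; rewrite inE eH nh /= sub.
  by rewrite (bigD1 (p, v)) //= sub.
have step2 : forall pv, P pv ->
    (hdeg H (pv.2 |: tset pv.1))%:R <= delta * (hdeg H (tset pv.1))%:R :> R.
  move=> [p v] /andP[/existsP[b /andP[bB /eqP E]] /existsP[e /andP[eL sub]]] /=.
  have := hB b bB; rewrite E rcons_uniq => /andP[vp _].
  move: eL; rewrite inE => /andP[_ nh].
  rewrite leNgt; apply/negP => hlt.
  move/negP: nh; apply.
  apply/existsP; exists (tset p).
  rewrite (subset_trans _ sub) ?subsetUr //=.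
  apply/existsP; exists v.
  rewrite !inE (subsetP sub) ?setU11 //= andbT.
  by rewrite vp ltW.
have step3 : (\sum_(pv | P pv) hdeg H (tset pv.1) <=
             s * \sum_(p : (l.-1).-tuple V | uniq p) hdeg H (tset p))%N.
  rewrite -(pair_big_dep xpredT (fun q v => P (q, v)) (fun q v => hdeg H (tset q))) /=.
  rewrite big_distrr /= [X in (_ <= X)%N]big_mkcond /=.
  apply: leq_sum => p _.
  rewrite sum_nat_const.
  case up: (uniq p).
    rewrite leq_mul2r; apply/orP; right.
    apply: leq_trans (hs p); apply: subset_leq_card; apply/subsetP => v.
    by rewrite !inE => /andP[].
  suff -> : #|[pred v | P (p, v)]| = 0%N by [].
  apply: eq_card0 => v.
  rewrite !inE; apply/negP => /andP[/existsP[b /andP[bB /eqP E]] _].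
  by have := hB b bB; rewrite E rcons_uniq up andbF.
have step4 := sum_uniq_deg (l.-1) hu.
have Csub : (#|[set e in H | contains_tuple B e]| <=
             #|[set e in H | heavy H delta e]| + #|CL|)%N.
  apply: leq_trans (leq_card_setU _ _); apply: subset_leq_card.
  apply/subsetP => e; rewrite !inE => /andP[eH ec].
  by rewrite eH ec /=; case: (heavy H delta e).
apply: le_trans (_ : (#|[set e in H | heavy H delta e]| + #|CL|)%:R <= _).
  by rewrite ler_nat.
rewrite natrD mulrDl lerD //.
have h1 : (#|CL|%:R : R) <= delta * (\sum_(pv | P pv) hdeg H (tset pv.1))%:R.
  apply: le_trans (_ : (\sum_(pv | P pv) hdeg H (pv.2 |: tset pv.1))%:R <= _).
    by rewrite ler_nat.
  rewrite !natr_sum mulr_sumr; apply: ler_sum => pv Ppv; exact: step2.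
apply: le_trans h1 _.
rewrite [t`!%:R * _ * _]mulrC -mulrA ler_pM2l //.
rewrite -!natrM ler_nat.
apply: leq_trans (_ : (s * (t`! * #|H|) <= _)%N).
  apply: leq_trans step3 _; by rewrite leq_mul2l step4 orbT.
by rewrite mulnA [(s * _)%N]mulnC.
Qed.
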